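(* Let $\nabla$ be the unique torsionless connection on $\mathcal E$ that is unitary with respect to the canonical metric $g$, and write $\nabla(e_i)=\sum_{j,k=1}^3e_j\otimes e_k\Gamma^i_{jk}$. Then $\Gamma^1_{32}=\Gamma^2_{13}=\Gamma^3_{21}=\tfrac12$, $\Gamma^1_{23}=\Gamma^2_{31}=\Gamma^3_{12}=-\tfrac12$, and all other $\Gamma^i_{jk}$ vanish; that is, $$\nabla(e_1)=\tfrac12(e_3\otimes e_2-e_2\otimes e_3),\ \nabla(e_2)=\tfrac12(e_1\otimes e_3-e_3\otimes e_1),\ \nabla(e_3)=\tfrac12(e_2\otimes e_1-e_1\otimes e_2).$$
   Context: Let $\mathcal O_3$ be the Cuntz algebra with three generators ($S_i^*S_i=1$, $\sum_jS_jS_j^*=1$), $\mathcal A$ the unital $*$-subalgebra generated by $S_1,S_2,S_3$. Let $\partial_1,\partial_2,\partial_3$ be the $*$-derivations of $\mathcal A$ with $\partial_1S_1=0,\ \partial_1S_2=-S_3,\ \partial_1S_3=S_2$; $\partial_2S_1=-S_3,\ \partial_2S_2=0,\ \partial_2S_3=S_1$; $\partial_3S_1=S_2,\ \partial_3S_2=-S_1,\ \partial_3S_3=0$. Let $\mathcal D=\sum_i\partial_i\otimes\sigma_i$ on $L^2(\mathcal O_3,\tau)\otimes\mathbb C^N$ ($\tau$ the KMS state, $\mathcal A$ acting by $a\otimes I$), with $\sigma_i$ mutually anticommuting involutions such that $\{\sigma_i\}$ and $\{I,\sigma_1\sigma_2,\sigma_1\sigma_3,\sigma_2\sigma_3\}$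 are linearly independent. The Connes calculus: $\Omega^k_{\mathcal D}(\mathcal A)=\Pi(\Omega^k(\mathcal A))/\Pi(\delta J_0^{k-1})$ with $\Pi(a_0\delta a_1\cdots\delta a_k)=a_0[\mathcal D,a_1]\cdots[\mathcal D,a_k]$, $J_0^k=\ker\Pi\cap\Omega^k(\mathcal A)$, differential $d$ induced by $\delta$, product $m$ induced by multiplication. $\mathcal E=\Omega^1_{\mathcal D}(\mathcal A)$ is free with basis $e_i=1\otimes\sigma_i$, $ae_i=e_ia$; $m(e_i\otimes e_j)$ = class of $1\otimes\sigma_i\sigma_j$. A connection is a $\mathbb C$-linear $\nabla:\mathcal E\to\mathcal E\otimes_{\mathcal A}\mathcal E$ with $\nabla(\omega a)=\nabla(\omega)a+\omega\otimes da$; torsionless means $m\circ\nabla+d=0$. The canonical metric is the right $\mathcal A$-linear $g$ with $g(e_i\otimes e_ja)=\delta_{ij}a$. Unitarity with respect to $g$ means $\Pi_g(\nabla)=dg$, where $dg,\Pi_g(\nabla):\mathcal E\otimes_{\mathcal A}\mathcal E\to\mathcal E$ are right $\mathcal A$-linear with $dg(e_i\otimes e_j)=d(g(e_i\otimes e_j))$ and $\Pi_g(\nabla)(e_i\otimes e_j)=(g\otimes\mathrm{id})\sigma_{23}(\nabla(e_i)\otimes e_j+\nabla(e_j)\otimes e_i)$, where $\sigma_{23}(e_a\otimes e_b\otimes e_cx)=e_a\otimes e_c\otimes e_bx$ and $(g\otimes\mathrm{id})(e_a\otimes e_b\otimes e_cx)=g(e_a\otimes e_b)e_cx$. (Such a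 $\nabla$ exists and is unique.) *)

(* Defs.v *)
From HB Require Import structures.
From mathcomp Require Import all_boot all_order all_algebra.
Set Implicit Arguments. Unset Strict Implicit. Unset Printing Implicit Defensive.
Import GRing.Theory Num.Theory.
Local Open Scope ring_scope.

Definition I1 : 'I_3 := @Ordinal 3 0 isT.
Definition I2 : 'I_3 := @Ordinal 3 1 isT.
Definition I3 : 'I_3 := @Ordinal 3 2 isT.

Section CuntzCalculus.
Variables (C : numClosedFieldType) (A : algType C).

Definition is_star (st : A -> A) : Prop :=
  [/\ involutive st,
      (forall x y, st (x + y) = st x + st y),
      (forall x y, st (x * y) = st y * st x) &
      (forall (c : C) x, st (c *: x) = (Num.conj c) *: st x)].

Definition cuntz (st : A -> A) (S : 'I_3 -> A) : Prop :=
  (forall i j, st (S i) * S j = (i == j)%:R) /\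
  \sum_(j < 3) S j * st (S j) = 1.

Definition generates (st : A -> A) (S : 'I_3 -> A) : Prop :=
  forall P : A -> Prop,
    P 1 ->
    (forall x y, P x -> P y -> P (x + y)) ->
    (forall (c : C) x, P x -> P (c *: x)) ->
    (forall x y, P x -> P y -> P (x * y)) ->
    (forall x, P x -> P (st x)) ->
    (forall i, P (S i)) ->
    forall a, P a.

Definition is_star_derivation (st : A -> A) (D : A -> A) : Prop :=
  [/\ (forall (c : C) x y, D (c *: x + y) = c *: D x + D y),
      (forall x y, D (x * y) = D x * y + x * D y) &
      (forall x, D (st x) = st (D x))].

Definition derivation_values (dd : 'I_3 -> A -> A) (S : 'I_3 -> A) : Prop :=
  [/\ [/\ dd I1 (S I1) = 0, dd I1 (S I2) = - S I3 & dd I1 (S I3) = S I2],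
      [/\ dd I2 (S I1) = - S I3, dd I2 (S I2) = 0 & dd I2 (S I3) = S I1] &
      [/\ dd I3 (S I1) = S I2, dd I3 (S I2) = - S I1 & dd I3 (S I3) = 0]].

Variable N : nat.

Definition clifford (sig : 'I_3 -> 'M[C]_N) : Prop :=
  [/\ (forall i, sig i *m sig i = 1%:M),
      (forall i j, i != j -> sig i *m sig j = - (sig j *m sig i)),
      (forall c : 'I_3 -> C, \sum_i c i *: sig i = 0 -> forall i, c i = 0) &
      forall (c0 c12 c13 c23 : C),
        c0 *: 1%:M + c12 *: (sig I1 *m sig I2) + c13 *: (sig I1 *m sig I3)
          + c23 *: (sig I2 *m sig I3) = 0 ->
        [/\ c0 = 0, c12 = 0, c13 = 0 & c23 = 0]].

(* operators on L^2 (x) C^N are modelled by A (x) M_N(C) = M_N(A);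
   a in A acts as a%:M, and sigma as the lifted scalar matrix *)
Definition liftm (M : 'M[C]_N) : 'M[A]_N := map_mx (fun c => c%:A) M.

Variables (dd : 'I_3 -> A -> A) (sig : 'I_3 -> 'M[C]_N).

(* [D, a] = sum_i partial_i(a) (x) sigma_i *)
Definition Dcomm (a : A) : 'M[A]_N := \sum_(i < 3) (dd i a)%:M *m liftm (sig i).

(* universal 1-forms  sum_t a0_t delta a1_t  are given by lists of pairs *)
Definition Pi1 (l : seq (A * A)) : 'M[A]_N :=
  \sum_(t <- l) (t.1)%:M *m Dcomm t.2.

(* Pi (delta omega) for omega = sum_t a0_t delta a1_t *)
Definition Pi_delta1 (l : seq (A * A)) : 'M[A]_N :=
  \sum_(t <- l) Dcomm t.1 *m Dcomm t.2.

Definition junk2 (X : 'M[A]_N) : Prop :=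
  exists l : seq (A * A), Pi1 l = 0 /\ X = Pi_delta1 l.

(* an element sum_i e_i w_i of E is its row of coefficients w : 'rV[A]_3;
   an element sum_{j,k} e_j (x) e_k X_jk of E (x)_A E is X : 'M[A]_3 *)

Definition ebasis (i : 'I_3) : 'rV[A]_3 := \row_k (i == k)%:R.

(* coefficients of the element Pi(sum_t a0_t delta a1_t) of E *)
Definition E_of (l : seq (A * A)) : 'rV[A]_3 :=
  \row_k \sum_(t <- l) t.1 * dd k t.2.

Definition ract (w : 'rV[A]_3) (a : A) : 'rV[A]_3 := \row_k (w 0 k * a).
Definition ract2 (X : 'M[A]_3) (a : A) : 'M[A]_3 := \matrix_(j, k) (X j k * a).
Definition dA (a : A) : 'rV[A]_3 := \row_k dd k a.
Definition tens (w v : 'rV[A]_3) : 'M[A]_3 := \matrix_(j, k) (w 0 j * v 0 k).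

(* multiplication m : E (x) E -> Omega^2_D, representative in M_N(A) *)
Definition mmap (X : 'M[A]_3) : 'M[A]_N :=
  \sum_(j < 3) \sum_(k < 3) (X j k)%:M *m liftm (sig j *m sig k).

Definition connection (nab : 'rV[A]_3 -> 'M[A]_3) : Prop :=
  (forall (c : C) x y, nab ((c%:A) *: x + y) = (c%:A) *: nab x + nab y) /\
  (forall w a, nab (ract w a) = ract2 (nab w) a + tens w (dA a)).

(* m o nab + d = 0 : for every omega = Pi(u) in E,
   m(nab omega) + d omega is zero in Omega^2_D *)
Definition torsionless (nab : 'rV[A]_3 -> 'M[A]_3) : Prop :=
  forall l : seq (A * A), junk2 (mmap (nab (E_of l)) + Pi_delta1 l).

(* E (x) E (x) E, coefficient T a b c of e_a (x) e_b (x) e_c *)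
Definition tens3 (X : 'M[A]_3) (v : 'rV[A]_3) : 'I_3 -> 'M[A]_3 :=
  fun a => \matrix_(b, c) (X a b * v 0 c).
Definition sigma23 (T : 'I_3 -> 'M[A]_3) : 'I_3 -> 'M[A]_3 :=
  fun a => \matrix_(b, c) T a c b.
Definition g_id (T : 'I_3 -> 'M[A]_3) : 'rV[A]_3 :=
  \row_c \sum_(a < 3) T a a c.
Definition addT (T U : 'I_3 -> 'M[A]_3) : 'I_3 -> 'M[A]_3 := fun a => T a + U a.

Definition gmetric (i j : 'I_3) : A := (i == j)%:R.

Definition Pi_g (nab : 'rV[A]_3 -> 'M[A]_3) (i j : 'I_3) : 'rV[A]_3 :=
  g_id (sigma23 (addT (tens3 (nab (ebasis i)) (ebasis j))
                      (tens3 (nab (ebasis j)) (ebasis i)))).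

Definition dg (i j : 'I_3) : 'rV[A]_3 := dA (gmetric i j).

(* both sides are right A-linear maps on the free module E (x) E,
   so equality is tested on the basis e_i (x) e_j *)
Definition unitary (nab : 'rV[A]_3 -> 'M[A]_3) : Prop :=
  forall i j, Pi_g nab i j = dg i j.

Definition half_sc : A := (2%:R^-1 : C)%:A.

End CuntzCalculus.

(* Main.v *)
Set Warnings "-notation-overridden,-ambiguous-paths".
Require Import Defs.
From HB Require Import structures.
From mathcomp Require Import all_boot all_order all_algebra.
Import GRing.Theory Num.Theory.
Local Open Scope ring_scope.

Lemma all3 (i : 'I_3) : i = I1 \/ i = I2 \/ i = I3.
Proof.
case: i => [[|[|[|?]]] H]; [left|right;left|right;right|by []]; exact: val_inj.
Qed.

Lemma sum3 (V : nmodType) (F : 'I_3 -> V) : \sum_i F i = F I1 + F I2 + F I3.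
Proof.
rewrite !big_ord_recl big_ord0 addr0 addrA.
by congr (F _ + F _ + F _); apply: val_inj.
Qed.


Lemma dual_basis (C : fieldType) N m (M : 'I_m -> 'M[C]_N) :
 (forall c : 'I_m -> C, \sum_r c r *: M r = 0 -> forall r, c r = 0) ->
 exists f : 'I_m -> 'M[C]_N -> C,
   (forall r X, f r X = \sum_p \sum_q X p q * f r (delta_mx p q)) /\
   (forall r s, f r (M s) = (s == r)%:R).
Proof.
move=> Hind.
pose X := [tuple M r | r < m].
have HX : forall i : 'I_m, X`_i = M i by move=> i; rewrite nth_mktuple.
have fX : free X.
  apply/freeP => k Hk i; apply: (Hind k) => //; rewrite -[RHS]Hk.
  by apply: eq_bigr => j _; rewrite HX.
exists (fun r => coord X r); split.
  move=> r Y; rewrite {1}(matrix_sum_delta Y) linear_sum; apply: eq_bigr => p _.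
  by rewrite linear_sum; apply: eq_bigr => q _; rewrite linearZ.
by move=> r s; rewrite -HX coord_free.
Qed.

Arguments dual_basis {C N m M}.

Lemma zid (V : zmodType) (a1 a2 a3 a4 b1 b4 : V) :
  a1 + a2 + (a3 + a4) + (- b1 - a3 + (- a2 - b4)) = a1 - b1 + (a4 - b4).
Proof.
rewrite -!addrA; congr (a1 + _).
by rewrite [- a3 + _]addrCA [- b1 + _]addrCA (addrCA a4) (addrCA a3) addNKr (addrCA (- b1) (- a3)) (addrCA a4 (- a3)) addNKr addrCA.

Qed.

Set Implicit Arguments.
Section Proof8.
Variables (C : numClosedFieldType) (A : algType C) (st : A -> A) (S : 'I_3 -> A).

Section Der.
Variable D : A -> A.
Hypothesis HD : is_star_derivation st D.
Let HDL : forall (c : C) x y, D (c *: x + y) = c *: D x + D y. Proof. by case: HD. Qed.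
Let HDM : forall x y, D (x * y) = D x * y + x * D y. Proof. by case: HD. Qed.
Let HDS : forall x, D (st x) = st (D x). Proof. by case: HD. Qed.

Lemma dD0 : D 0 = 0.
Proof. by have := HDM 0 0; rewrite !mul0r mulr0 addr0. Qed.
Lemma dDD x y : D (x + y) = D x + D y.
Proof. by have := HDL 1 x y; rewrite !scale1r. Qed.
Lemma dDZ (c : C) x : D (c *: x) = c *: D x.
Proof. by have := HDL c x 0; rewrite !addr0 dD0 addr0. Qed.
Lemma dDN x : D (- x) = - D x.
Proof. by rewrite -scaleN1r dDZ scaleN1r. Qed.
Lemma dDB x y : D (x - y) = D x - D y.
Proof. by rewrite dDD dDN. Qed.
Lemma dDM x y : D (x * y) = D x * y + x * D y.
Proof. exact: HDM. Qed.
Lemma dDst x : D (st x) = st (D x).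
Proof. exact: HDS. Qed.
Lemma dD1 : D 1 = 0.
Proof.
have := dDM 1 1; rewrite mulr1 mul1r => /eqP.
by rewrite -subr_eq0 !mulr1 opprD addrA subrr sub0r oppr_eq0 => /eqP.
Qed.
Lemma dDsum (I : Type) (r : seq I) (F : I -> A) : D (\sum_(t <- r) F t) = \sum_(t <- r) D (F t).
Proof.
elim: r => [|x r IH]; first by rewrite !big_nil dD0.
by rewrite !big_cons dDD IH.
Qed.
Lemma dDnat (b : bool) : D (b%:R) = 0.
Proof. by case: b; rewrite ?dD1 ?dD0. Qed.
End Der.

Hypothesis Hst : is_star st.
Lemma stD x y : st (x + y) = st x + st y.
Proof. by case: Hst => _ H _ _; apply: H. Qed.
Lemma st0 : st 0 = 0.
Proof.
have := stD 0 0; rewrite addr0 => /eqP.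
by rewrite -subr_eq0 opprD addrA subrr sub0r oppr_eq0 => /eqP.
Qed.
Lemma stN x : st (- x) = - st x.
Proof. by apply/eqP; rewrite -subr_eq0 opprK -stD addNr st0. Qed.
Lemma stB x y : st (x - y) = st x - st y.
Proof. by rewrite stD stN. Qed.

Hypothesis Hgen : generates st S.

Lemma comm_gen D1 D2 D3 :
  is_star_derivation st D1 -> is_star_derivation st D2 -> is_star_derivation st D3 ->
  (forall i, D1 (D2 (S i)) - D2 (D1 (S i)) = D3 (S i)) ->
  forall a, D1 (D2 a) - D2 (D1 a) = D3 a.
Proof.
move=> H1 H2 H3 HS; apply: Hgen => //.
- by rewrite (dD1 H2) (dD1 H1) (dD0 H1) (dD0 H2) (dD1 H3) subrr.
- move=> x y Hx Hy; rewrite (dDD H2) (dDD H1) (dDD H1) (dDD H2) (dDD H3) -Hx -Hy.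
  by rewrite opprD addrACA.
- move=> c x Hx; by rewrite (dDZ H2) (dDZ H1) (dDZ H1) (dDZ H2) (dDZ H3) -Hx scalerBr.
- move=> x y Hx Hy; rewrite !(dDM H2, dDM H1, dDD H1, dDD H2, dDM H3) -Hx -Hy mulrBl mulrBr.
  by rewrite !opprD zid.
- move=> x Hx; by rewrite (dDst H2) (dDst H1) (dDst H1) (dDst H2) -stB Hx (dDst H3).
Qed.


Variables (dd : 'I_3 -> A -> A) (N : nat) (sig : 'I_3 -> 'M[C]_N).
Hypothesis Hd : forall i, is_star_derivation st (dd i).
Hypothesis Hv : derivation_values dd S.
Hypothesis Hcz : cuntz st S.
Hypothesis Hcl : clifford sig.

Lemma cz i j : st (S i) * S j = (i == j)%:R.
Proof. by case: Hcz. Qed.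

Let dv := Hv.
Lemma d11 : dd I1 (S I1) = 0. Proof. by case: dv => [[]]. Qed.
Lemma d12 : dd I1 (S I2) = - S I3. Proof. by case: dv => [[]]. Qed.
Lemma d13 : dd I1 (S I3) = S I2. Proof. by case: dv => [[]]. Qed.
Lemma d21 : dd I2 (S I1) = - S I3. Proof. by case: dv => [_ []]. Qed.
Lemma d22 : dd I2 (S I2) = 0. Proof. by case: dv => [_ []]. Qed.
Lemma d23 : dd I2 (S I3) = S I1. Proof. by case: dv => [_ []]. Qed.
Lemma d31 : dd I3 (S I1) = S I2. Proof. by case: dv => [_ _ []]. Qed.
Lemma d32 : dd I3 (S I2) = - S I1. Proof. by case: dv => [_ _ []]. Qed.
Lemma d33 : dd I3 (S I3) = 0. Proof. by case: dv => [_ _ []]. Qed.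

Lemma ddN i x : dd i (- x) = - dd i x. Proof. exact: dDN. Qed.
Lemma dd0 i : dd i 0 = 0. Proof. exact: dD0. Qed.
Lemma ddst i x : dd i (st x) = st (dd i x). Proof. exact: dDst. Qed.

Ltac dsimp := rewrite ?(d11, d12, d13, d21, d22, d23, d31, d32, d33, ddN, dd0, ddst, st0, stN,
   opprK, oppr0, subr0, sub0r, addr0, add0r).

Lemma comm21 a : dd I2 (dd I1 a) - dd I1 (dd I2 a) = dd I3 a.
Proof.
apply: (comm_gen (Hd I2) (Hd I1) (Hd I3)) => i; case: (all3 i) => [->|[->|->]]; by dsimp.
Qed.
Lemma comm32 a : dd I3 (dd I2 a) - dd I2 (dd I3 a) = dd I1 a.
Proof.
apply: (comm_gen (Hd I3) (Hd I2) (Hd I1)) => i; case: (all3 i) => [->|[->|->]]; by dsimp.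
Qed.
Lemma comm13 a : dd I1 (dd I3 a) - dd I3 (dd I1 a) = dd I2 a.
Proof.
apply: (comm_gen (Hd I1) (Hd I3) (Hd I2)) => i; case: (all3 i) => [->|[->|->]]; by dsimp.
Qed.

Lemma liftmM (M M' : 'M[C]_N) : liftm A (M *m M') = liftm A M *m liftm A M'.
Proof. exact: (map_mxM (in_alg A)). Qed.
Lemma liftm1 : liftm A (1%:M : 'M[C]_N) = 1%:M.
Proof. exact: (map_mx1 (in_alg A)). Qed.
Lemma liftmN (M : 'M[C]_N) : liftm A (- M) = - liftm A M.
Proof. exact: (map_mxN (in_alg A)). Qed.
Lemma lift_comm (M : 'M[C]_N) (b : A) : liftm A M *m b%:M = b%:M *m liftm A M.
Proof.
apply/matrixP => i j; rewrite mul_scalar_mx [RHS]mxE [in RHS]mxE mulr_algr.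
rewrite mxE (bigD1 j) //= big1 => [|k /negbTE nkj]; rewrite !mxE ?eqxx ?nkj.
  by rewrite mulr1n addr0 mulr_algl.
by rewrite mulr0n mulr0.
Qed.

Definition PhiA (lam : 'M[C]_N -> C) (X : 'M[A]_N) : A :=
  \sum_p \sum_q X p q * (lam (delta_mx p q))%:A.

Lemma PhiA_add lam X Y : PhiA lam (X + Y) = PhiA lam X + PhiA lam Y.
Proof.
rewrite /PhiA -big_split; apply: eq_bigr => p _.
by rewrite -big_split; apply: eq_bigr => q _; rewrite mxE mulrDl.
Qed.
Lemma PhiA_0 lam : PhiA lam 0 = 0.
Proof. by rewrite /PhiA big1 // => p _; rewrite big1 // => q _; rewrite mxE mul0r. Qed.
Lemma PhiA_lift (lam : 'M[C]_N -> C) :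
  (forall X : 'M[C]_N, lam X = \sum_p \sum_q X p q * lam (delta_mx p q)) ->
  forall x (M : 'M[C]_N), PhiA lam (x%:M *m liftm A M) = x * (lam M)%:A.
Proof.
move=> Hlam x M; rewrite /PhiA (Hlam M) scaler_suml mulr_sumr; apply: eq_bigr => p _.
rewrite scaler_suml mulr_sumr; apply: eq_bigr => q _.
by rewrite mul_scalar_mx !mxE -mulrA mulr_algl scalerA.
Qed.

Lemma Dcomm_mul a b : Dcomm dd sig a *m Dcomm dd sig b = mmap sig (\matrix_(j, k) (dd j a * dd k b)).
Proof.
rewrite /Dcomm /mmap mulmx_suml; apply: eq_bigr => j _; rewrite mulmx_sumr; apply: eq_bigr => k _.
rewrite mxE liftmM scalar_mxM !mulmxA -(mulmxA _ (liftm A (sig j))) lift_comm.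
by rewrite !mulmxA.
Qed.

Lemma mmapD (X Y : 'M[A]_3) : mmap sig (X + Y) = mmap sig X + mmap sig Y.
Proof.
rewrite /mmap -big_split; apply: eq_bigr => j _; rewrite -big_split; apply: eq_bigr => k _.
by rewrite mxE raddfD mulmxDl.
Qed.
Lemma mmap0 : mmap sig (0 : 'M[A]_3) = 0.
Proof.
rewrite /mmap big1 // => j _; rewrite big1 // => k _.
by rewrite mxE raddf0 mul0mx.
Qed.
Lemma mmapN (X : 'M[A]_3) : mmap sig (- X) = - mmap sig X.
Proof.
rewrite /mmap -sumrN; apply: eq_bigr => j _; rewrite -sumrN; apply: eq_bigr => k _.
by rewrite mxE raddfN mulNmx.
Qed.

Lemma Pi1_sum l : Pi1 dd sig l = \sum_(t <- l) \sum_i (t.1 * dd i t.2)%:M *m liftm A (sig i).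
Proof.
rewrite /Pi1; apply: eq_bigr => t _; rewrite /Dcomm mulmx_sumr; apply: eq_bigr => i _.
by rewrite mulmxA -scalar_mxM.
Qed.

Lemma sum_del (x : 'I_3 -> A) r : \sum_i x i * (((i == r)%:R : C)%:A) = x r.
Proof.
rewrite (bigD1 r) //= eqxx scale1r mulr1 big1 ?addr0 // => i /negbTE ->.
by rewrite scale0r mulr0.
Qed.

Lemma indep3 : forall c : 'I_3 -> C, \sum_r c r *: sig r = 0 -> forall r, c r = 0.
Proof. by case: Hcl. Qed.

Lemma dsum_prod j k (l : seq (A * A)) : \sum_(t <- l) dd j (t.1 * dd k t.2) =
  \sum_(t <- l) dd j t.1 * dd k t.2 + \sum_(t <- l) t.1 * dd j (dd k t.2).
Proof. by rewrite -big_split; apply: eq_bigr => t _; exact: dDM. Qed.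

Lemma junk_sym X : junk2 dd sig X -> exists Y : 'M[A]_3, X = mmap sig Y /\
   [/\ Y I1 I2 = Y I2 I1, Y I1 I3 = Y I3 I1 & Y I2 I3 = Y I3 I2].
Proof.
case=> l [H0 ->].
have [f [Hf1 Hf2]] := dual_basis indep3.
have Hr : forall r, \sum_(t <- l) t.1 * dd r t.2 = 0.
  move=> r; have := congr1 (PhiA (f r)) H0.
  rewrite PhiA_0 Pi1_sum (big_morph (PhiA (f r)) (PhiA_add (f r)) (PhiA_0 (f r))) => E.
  rewrite -[RHS]E; apply: eq_bigr => t _; rewrite (big_morph (PhiA (f r)) (PhiA_add (f r)) (PhiA_0 (f r))).
  under eq_bigr do rewrite (PhiA_lift (f r) (Hf1 r)) Hf2.
  by rewrite (sum_del (fun i => t.1 * dd i t.2)).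
have Hsym : forall j k m, (forall a, dd k (dd j a) - dd j (dd k a) = dd m a) ->
    \sum_(t <- l) dd j t.1 * dd k t.2 = \sum_(t <- l) dd k t.1 * dd j t.2.
  move=> j k m Hc.
  have E1 : \sum_(t <- l) dd j t.1 * dd k t.2 = - \sum_(t <- l) t.1 * dd j (dd k t.2).
    by apply/eqP; rewrite -addr_eq0 -dsum_prod -(dDsum (Hd j)) Hr dd0.
  have E2 : \sum_(t <- l) dd k t.1 * dd j t.2 = - \sum_(t <- l) t.1 * dd k (dd j t.2).
    by apply/eqP; rewrite -addr_eq0 -dsum_prod -(dDsum (Hd k)) Hr dd0.
  rewrite E1 E2.
  apply/eqP; rewrite -subr_eq0 opprK addrC -sumrB.
  under eq_bigr do rewrite -mulrBr Hc.
  by rewrite Hr.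
exists (\matrix_(j, k) \sum_(t <- l) dd j t.1 * dd k t.2); split.
  rewrite /Pi_delta1 (eq_bigr _ (fun t _ => Dcomm_mul t.1 t.2)).
  rewrite -(big_morph (mmap sig) mmapD mmap0); congr (mmap sig _).
  by apply/matrixP => j k; rewrite summxE !mxE; apply: eq_bigr => t _; rewrite mxE.
rewrite !mxE; split.
- exact: (Hsym _ _ _ comm21).
- by rewrite (Hsym _ _ _ comm13).
- exact: (Hsym _ _ _ comm32).
Qed.

Definition o0 : 'I_4 := @Ordinal 4 0 isT.
Definition o1 : 'I_4 := @Ordinal 4 1 isT.
Definition o2 : 'I_4 := @Ordinal 4 2 isT.
Definition o3 : 'I_4 := @Ordinal 4 3 isT.

Definition M4 (r : 'I_4) : 'M[C]_N :=
  match nat_of_ord r with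
  | 0 => 1%:M | 1 => sig I1 *m sig I2 | 2 => sig I1 *m sig I3 | _ => sig I2 *m sig I3 end.

Lemma indep4 : forall c : 'I_4 -> C, \sum_r c r *: M4 r = 0 -> forall r, c r = 0.
Proof.
move=> c Hc; case: Hcl => _ _ _ H4.
rewrite !big_ord_recl big_ord0 addr0 /= !addrA in Hc.
have [h0 h1 h2 h3] := H4 _ _ _ _ Hc.
move=> [[|[|[|[|r]]]] Hr] //.
- by rewrite -h0; congr c; apply: val_inj.
- by rewrite -h1; congr c; apply: val_inj.
- by rewrite -h2; congr c; apply: val_inj.
- by rewrite -h3; congr c; apply: val_inj.
Qed.

Lemma key4 (Z : 'M[A]_3) : mmap sig Z = 0 ->
  [/\ Z I1 I2 = Z I2 I1, Z I1 I3 = Z I3 I1 & Z I2 I3 = Z I3 I2].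
Proof.
move=> HZ; have [g [Hg1 Hg2]] := dual_basis indep4.
have gN r (X : 'M[C]_N) : g r (- X) = - g r X.
  rewrite [LHS]Hg1 [in RHS]Hg1 -sumrN; apply: eq_bigr => p _; rewrite -sumrN; apply: eq_bigr => q _.
  by rewrite mxE mulNr.
have PM r : PhiA (g r) (mmap sig Z) = \sum_j \sum_k Z j k * (g r (sig j *m sig k))%:A.
  rewrite /mmap (big_morph (PhiA (g r)) (PhiA_add (g r)) (PhiA_0 (g r))); apply: eq_bigr => j _.
  rewrite (big_morph (PhiA (g r)) (PhiA_add (g r)) (PhiA_0 (g r))); apply: eq_bigr => k _.
  exact: (PhiA_lift (g r) (Hg1 r)).
have sq i : sig i *m sig i = 1%:M by case: Hcl.
have an i j : i != j -> sig i *m sig j = - (sig j *m sig i) by case: Hcl => _ H _ _; apply: H.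
have g0 r : g r 1%:M = (o0 == r)%:R by exact: (Hg2 r o0).
have g1 r : g r (sig I1 *m sig I2) = (o1 == r)%:R by exact: (Hg2 r o1).
have g2 r : g r (sig I1 *m sig I3) = (o2 == r)%:R by exact: (Hg2 r o2).
have g3 r : g r (sig I2 *m sig I3) = (o3 == r)%:R by exact: (Hg2 r o3).
have E r : 0 = \sum_j \sum_k Z j k * (g r (sig j *m sig k))%:A by rewrite -PM HZ PhiA_0.
have := E o1; have := E o2; have := E o3.
rewrite !sum3 !sq (an I2 I1) // (an I3 I1) // (an I3 I2) // !gN !g0 !g1 !g2 !g3 /=.
rewrite ?oppr0 ?scale0r ?scale1r ?scaleN1r ?mulr0 ?mulr1 ?mulrN1 ?add0r ?addr0.
move=> h23 h13 h12; split; apply/eqP; rewrite -subr_eq0.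
- by rewrite -h12.
- by rewrite -h13.
- by rewrite -h23.
Qed.

Lemma sum_delA (x : 'I_3 -> A) j : \sum_a x a * ((j == a)%:R : A) = x j.
Proof.
rewrite (bigD1 j) //= eqxx mulr1 big1 ?addr0 // => i; rewrite eq_sym => /negbTE ->.
by rewrite mulr0.
Qed.

Variable nab : 'rV[A]_3 -> 'M[A]_3.
Hypothesis Htor : torsionless dd sig nab.
Hypothesis Hun : unitary dd nab.

Definition G i j k := nab (ebasis A i) j k.

Lemma Ug i j k : G i j k + G j i k = 0.
Proof.
have := Hun i j; move/rowP/(_ k).
rewrite /Pi_g /dg /g_id /sigma23 /addT /tens3 /dA /gmetric !mxE (dDnat (Hd k)).
under eq_bigr do rewrite !mxE.
by rewrite big_split /= !sum_delA.
Qed.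

Lemma tor_gen i a b : E_of dd [:: (a, b)] = ebasis A i ->
  [/\ G i I1 I2 + dd I1 a * dd I2 b = G i I2 I1 + dd I2 a * dd I1 b,
      G i I1 I3 + dd I1 a * dd I3 b = G i I3 I1 + dd I3 a * dd I1 b &
      G i I2 I3 + dd I2 a * dd I3 b = G i I3 I2 + dd I3 a * dd I2 b].
Proof.
move=> HE; have := Htor [:: (a, b)]; rewrite HE.
case/junk_sym => Y [HY [y12 y13 y23]].
rewrite /Pi_delta1 big_seq1 Dcomm_mul /= in HY.
have : mmap sig (nab (ebasis A i) + \matrix_(j, k) (dd j a * dd k b) - Y) = 0.
  by rewrite !mmapD mmapN HY subrr.
case/key4; rewrite !mxE y12 y13 y23 => /addIr e12 /addIr e13 /addIr e23.
by split.
Qed.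

Ltac csimp := dsimp; rewrite ?(mulrNN, mulrN, mulNr, mulr0, mul0r, cz, opprK, oppr0) /=;
  rewrite ?(mulr1n, mulr0n, oppr0, opprK).

Lemma Eof1 : E_of dd [:: (- st (S I3), S I2)] = ebasis A I1.
Proof.
by apply/rowP => k; rewrite !mxE big_cons big_nil addr0 /=; case: (all3 k) => [->|[->|->]]; csimp.
Qed.
Lemma Eof2 : E_of dd [:: (- st (S I3), S I1)] = ebasis A I2.
Proof.
by apply/rowP => k; rewrite !mxE big_cons big_nil addr0 /=; case: (all3 k) => [->|[->|->]]; csimp.
Qed.
Lemma Eof3 : E_of dd [:: (st (S I2), S I1)] = ebasis A I3.
Proof.
by apply/rowP => k; rewrite !mxE big_cons big_nil addr0 /=; case: (all3 k) => [->|[->|->]]; csimp.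
Qed.

Definition target (i : 'I_3) : 'M[A]_3 :=
  if i == I1 then half_sc A *: (tens (ebasis A I3) (ebasis A I2) - tens (ebasis A I2) (ebasis A I3))
  else if i == I2 then half_sc A *: (tens (ebasis A I1) (ebasis A I3) - tens (ebasis A I3) (ebasis A I1))
  else half_sc A *: (tens (ebasis A I2) (ebasis A I1) - tens (ebasis A I1) (ebasis A I2)).
Definition Gam i j k := target i j k.

Lemma hh : half_sc A + half_sc A = 1.
Proof.
rewrite /half_sc -scalerDl.
have -> : (2%:R^-1 + 2%:R^-1 : C) = 1.
  by rewrite -mulr2n -(mulr_natr (2%:R^-1 : C) 2) mulVf // pnatr_eq0.
by rewrite scale1r.
Qed.

Ltac tsimp := rewrite /Gam /target /= !mxE /=;
  rewrite ?(mulr1n, mulr0n, mulr0, mul0r, mulr1, mul1r, subr0, sub0r, subrr, mulrN1, addr0, add0r, opprK, oppr0).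

Lemma UGam i j k : Gam i j k + Gam j i k = 0.
Proof.
case: (all3 i) => [->|[->|->]]; case: (all3 j) => [->|[->|->]]; case: (all3 k) => [->|[->|->]];
  by tsimp; rewrite ?(addrN, addNr).
Qed.

Lemma mvT (x y u v c : A) : x + u = y + v -> v - u = c -> x - y = c.
Proof. by move=> H <-; rewrite -[x](addrK u) H addrAC [y + v]addrC addrK. Qed.

Ltac closer := csimp; tsimp; rewrite ?(addrN, addNr, mulrN, mulNr, mulr1, mul1r, opprK, oppr0, subr0, sub0r).

Ltac finish := try done; rewrite -hh ?opprD ?opprK; done.

Lemma HT (i : 'I_3) a b : E_of dd [:: (a, b)] = ebasis A i ->
  (dd I2 a * dd I1 b - dd I1 a * dd I2 b = Gam i I1 I2 - Gam i I2 I1) ->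
  (dd I3 a * dd I1 b - dd I1 a * dd I3 b = Gam i I1 I3 - Gam i I3 I1) ->
  (dd I3 a * dd I2 b - dd I2 a * dd I3 b = Gam i I2 I3 - Gam i I3 I2) ->
  [/\ G i I1 I2 - G i I2 I1 = Gam i I1 I2 - Gam i I2 I1,
      G i I1 I3 - G i I3 I1 = Gam i I1 I3 - Gam i I3 I1 &
      G i I2 I3 - G i I3 I2 = Gam i I2 I3 - Gam i I3 I2].
Proof.
move=> HE c1 c2 c3; case: (tor_gen HE) => e12 e13 e23.
split; [exact: (@mvT _ _ _ _ _ e12 c1) | exact: (@mvT _ _ _ _ _ e13 c2) | exact: (@mvT _ _ _ _ _ e23 c3)].
Qed.

Lemma HT1 : [/\ G I1 I1 I2 - G I1 I2 I1 = Gam I1 I1 I2 - Gam I1 I2 I1,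
      G I1 I1 I3 - G I1 I3 I1 = Gam I1 I1 I3 - Gam I1 I3 I1 &
      G I1 I2 I3 - G I1 I3 I2 = Gam I1 I2 I3 - Gam I1 I3 I2].
Proof.
by apply: (HT Eof1); closer; finish.
Qed.
Lemma HT2 : [/\ G I2 I1 I2 - G I2 I2 I1 = Gam I2 I1 I2 - Gam I2 I2 I1,
      G I2 I1 I3 - G I2 I3 I1 = Gam I2 I1 I3 - Gam I2 I3 I1 &
      G I2 I2 I3 - G I2 I3 I2 = Gam I2 I2 I3 - Gam I2 I3 I2].
Proof. by apply: (HT Eof2); closer; finish. Qed.
Lemma HT3 : [/\ G I3 I1 I2 - G I3 I2 I1 = Gam I3 I1 I2 - Gam I3 I2 I1,
      G I3 I1 I3 - G I3 I3 I1 = Gam I3 I1 I3 - Gam I3 I3 I1 &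
      G I3 I2 I3 - G I3 I3 I2 = Gam I3 I2 I3 - Gam I3 I3 I2].
Proof. by apply: (HT Eof3); closer; finish. Qed.

Definition Dd i j k := G i j k - Gam i j k.

Lemma DU i j k : Dd i j k + Dd j i k = 0.
Proof. by rewrite /Dd addrACA -opprD Ug UGam oppr0 addr0. Qed.

Lemma lemA (x y a b : A) : x - y = a - b -> x - a = y - b.
Proof. by move=> H; rewrite -[x](subrK y) H addrAC (addrAC a) subrr sub0r addrC. Qed.
Lemma lemB (x y a b : A) : x - y = a - b -> y - b = x - a.
Proof. by move=> H; rewrite (@lemA _ _ _ _ H). Qed.

Lemma DS i j k : Dd i j k = Dd i k j.
Proof.
case: HT1 => a12 a13 a23; case: HT2 => b12 b13 b23; case: HT3 => c12 c13 c23.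
rewrite /Dd.
case: (all3 i) => [->|[->|->]]; case: (all3 j) => [->|[->|->]]; case: (all3 k) => [->|[->|->]];
 first [ done | apply: lemA; assumption | apply: lemB; assumption ].
Qed.

Lemma Dzero i j k : Dd i j k = 0.
Proof.
have Ua a b c : Dd a b c = - Dd b a c by apply/eqP; rewrite -addr_eq0 DU.
have e : Dd i j k = - Dd i j k.
  by rewrite {1}(Ua i j k) (DS j i k) (Ua j k i) (DS k j i) (Ua k i j) (DS i k j) !opprK.
move/eqP: e; rewrite -addr_eq0 -mulr2n -scaler_nat scaler_eq0 pnatr_eq0 /=.
by move/eqP.
Qed.

Lemma main_sec : [/\ nab (ebasis A I1) = target I1, nab (ebasis A I2) = target I2 &
   nab (ebasis A I3) = target I3].
Proof.
have Hz i j k : G i j k = Gam i j k.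
  by apply/eqP; rewrite -subr_eq0; apply/eqP; exact: Dzero.
by split; apply/matrixP => j k; exact: Hz.
Qed.

End Proof8.

Unset Implicit Arguments.

Theorem mainTheorem8 (C : numClosedFieldType) (A : algType C) (st : A -> A)
    (S : 'I_3 -> A) (dd : 'I_3 -> A -> A) (N : nat) (sig : 'I_3 -> 'M[C]_N) :
  is_star st -> cuntz st S -> generates st S ->
  (forall i, is_star_derivation st (dd i)) -> derivation_values dd S ->
  clifford sig ->
  forall nab : 'rV[A]_3 -> 'M[A]_3,
    connection dd nab -> torsionless dd sig nab -> unitary dd nab ->
    [/\ nab (ebasis A I1) =
          half_sc A *: (tens (ebasis A I3) (ebasis A I2) - tens (ebasis A I2) (ebasis A I3)),
        nab (ebasis A I2) =
          half_sc A *: (tens (ebasis A I1) (ebasis A I3) - tens (ebasis A I3) (ebasis A I1)) &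
        nab (ebasis A I3) =
          half_sc A *: (tens (ebasis A I2) (ebasis A I1) - tens (ebasis A I1) (ebasis A I2))].
Proof.
move=> Hst Hcz Hgen Hd Hv Hcl nab _ Htor Hun.
exact: (main_sec Hst Hgen Hd Hv Hcz Hcl Htor Hun).
Qed.
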